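(* There is an absolute constant $C>0$ such that for every $d\ge1$, a standard Gaussian random vector $\mathbf{w}\sim\mathcal{N}(0,I_d)$ satisfies $\mathbb{E}\|\mathbf{w}\|_T\le C\sqrt{d}$.
   Context: For $\mathbf{v}\in\mathbb{R}^d$ define \[\|\mathbf{v}\|_T^2=\sup_{\emptyset\ne S\subseteq[d]}\log^4(2d/|S|)\sum_{j\in S}v_j^2.\] *)

(* Defs.v *)
From HB Require Import structures.
From mathcomp Require Import all_boot all_order all_algebra.
From mathcomp Require Import all_classical all_reals all_analysis.
Set Implicit Arguments. Unset Strict Implicit. Unset Printing Implicit Defensive.
Import Order.TTheory GRing.Theory Num.Theory.
Local Open Scope ring_scope.
Local Open Scope ereal_scope.

Definition Tnorm2 {R : realType} (d : nat) (v : 'I_d -> R) : R :=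
  (\big[Num.max/0%R]_(S : {set 'I_d} | S != finset.set0)
     (ln ((2 * d)%:R / #|S|%:R) ^+ 4 * \sum_(j in S) v j ^+ 2))%R.

Definition Tnorm {R : realType} (d : nat) (v : 'I_d -> R) : R :=
  Num.sqrt (Tnorm2 v).

Definition upd {R : realType} (v : nat -> R) (n : nat) (x : R) : nat -> R :=
  fun k => if k == n then x else v k.

(* gauss_exp n f = E[f(w)] where w_0..w_{n-1} i.i.d. N(0,1) (other coordinates 0),
   written as an iterated Lebesgue integral against the standard normal density
   (for nonnegative f, equal to the expectation w.r.t. N(0,I_n) by Tonelli). *)
Fixpoint gauss_exp {R : realType} (n : nat) (f : (nat -> R) -> \bar R) : \bar R :=
  match n with
  | 0%N => f (fun _ => 0%R)
  | n'.+1 => \int[@lebesgue_measure R]_(x in [set: R])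
               ((normal_pdf 0 1 x)%:E * gauss_exp n' (fun v => f (upd v n' x)))
  end.

Definition expected_Tnorm {R : realType} (d : nat) : \bar R :=
  gauss_exp d (fun v => (Tnorm (fun j : 'I_d => v (nat_of_ord j)))%:E).

(* Main.v *)
Require Import Defs.
From HB Require Import structures.
From mathcomp Require Import all_boot all_order all_algebra.
From mathcomp Require Import all_classical all_reals all_analysis.
From mathcomp Require Import ring lra zify measurable_realfun.
Import Order.TTheory GRing.Theory Num.Theory.
Local Open Scope ring_scope.

Local Open Scope ereal_scope.

Section S.
Context {R : realType}.

Lemma my_le_integral (f1 f2 : R -> \bar R) :
  (forall x, 0 <= f1 x) -> (forall x, f1 x <= f2 x) ->
  \int[@lebesgue_measure R]_(x in [set: R]) f1 x <=
  \int[@lebesgue_measure R]_(x in [set: R]) f2 x.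
Proof.
move=> f10 f12.
have f20 : forall x, 0 <= f2 x by move=> x; exact: le_trans (f10 x) (f12 x).
rewrite !ge0_integralTE //.
apply: le_ereal_sup => _ [h /= hf <-]; exists h => //= x.
exact: le_trans (hf x) (f12 x).
Qed.

Lemma pt4 (x : R) :
  (normal_pdf 0 1 x * x ^+ 4 <=
  (64 * normal_peak 1 / normal_peak 2) * normal_pdf 0 2 x)%R.
Proof.
Local Open Scope ring_scope.
rewrite !normal_pdfE ?oner_eq0 ?pnatr_eq0 // /normal_fun subr0.
rewrite /=.
set y := x ^+ 2 / 8.
have y0 : 0 <= y by rewrite divr_ge0 // sqr_ge0.
have e1 : expR (- x ^+ 2 / (1 ^+ 2 *+ 2)) = expR (- y) ^+ 4.
  rewrite -expRM_natl; congr expR; rewrite /y expr1n; by field.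
have e2 : expR (- x ^+ 2 / (2 ^+ 2 *+ 2)) = expR (- y).
  congr expR; rewrite /y; by field.
rewrite e1 e2.
have x4 : x ^+ 4 = 64 * y ^+ 2 by rewrite /y; by field.
rewrite x4.
set E := expR (- y).
have E0 : 0 <= E by apply: expR_ge0.
have E1 : E <= 1 by rewrite /E -expR0 ler_expR lerNl oppr0.
have yE : y * E <= 1.
  have h1 := expR_ge1Dx y.
  have h2 : expR y * E = 1 by rewrite /E expRN mulfV // gt_eqF // expR_gt0.
  nra.
have p1 := normal_peak_gt0 (R:=R) (s:=1) (oner_neq0 _).
have p2 : 0 < normal_peak (2:R) by apply: normal_peak_gt0; rewrite pnatr_eq0.
have -> : 64 * normal_peak 1 / normal_peak 2 * (normal_peak 2 * E) = 64 * normal_peak 1 * E.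
  by field; rewrite gt_eqF.
have yE0 : 0 <= y * E by apply: mulr_ge0.
have : (y * E) ^+ 2 * E ^+ 2 <= E.
  have : (y*E)^+2 <= 1 by nra.
  nra.
nra.
Qed.

Local Open Scope ereal_scope.
Definition M4 : R := (64 * normal_peak 1 / normal_peak 2)%R.

Lemma M4_ge0 : (0 <= M4)%R.
Proof.
rewrite /M4; apply: divr_ge0; last exact: normal_peak_ge0.
by apply: mulr_ge0 => //; exact: normal_peak_ge0.
Qed.

Lemma mom4 : \int[@lebesgue_measure R]_(x in [set: R])
   ((normal_pdf 0 1 x * x ^+ 4)%R)%:E <= M4%:E.
Proof.
apply: (@le_trans _ _ (\int[@lebesgue_measure R]_(x in [set: R]) (M4 * normal_pdf 0 2 x)%:E)).
  apply: my_le_integral.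
  - by move=> x; rewrite lee_fin mulr_ge0 // ?normal_pdf_ge0 // exprn_even_ge0.
  - by move=> x; rewrite lee_fin; exact: pt4.
under eq_integral do rewrite EFinM.
rewrite ge0_integralZl_EFin //; last exact: M4_ge0.
+ by rewrite integral_normal_pdf mule1.
+ by move=> x _; rewrite lee_fin normal_pdf_ge0.
+ by apply/measurable_EFinP; exact: measurable_normal_pdf.
Qed.

Lemma gauss_exp_ge0 n (f : (nat -> R) -> \bar R) :
  (forall v, 0 <= f v) -> 0 <= gauss_exp n f.
Proof.
elim: n f => [|n IH] f f0 /=; first exact: f0.
apply: integral_ge0 => x _; apply: mule_ge0; first by rewrite lee_fin normal_pdf_ge0.
by apply: IH.
Qed.

Lemma key (b : R) (b0 : (0 <= b)%R) n : forall (f : (nat -> R) -> \bar R) (a : R),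
  (0 <= a)%R -> (forall v, 0 <= f v) ->
  (forall v, f v <= (a + b * \sum_(j < n) v j ^+ 4)%:E) ->
  gauss_exp n f <= (a + M4 * b * n%:R)%:E.
Proof.
elim: n => [|n IH] f a a0 f0 hf /=.
  by have := hf (fun _ => 0%R); rewrite big_ord0 mulr0 addr0 mulr0 addr0.
pose c x := (a + b * x ^+ 4 + M4 * b * n%:R)%R.
apply: (@le_trans _ _ (\int[@lebesgue_measure R]_(x in [set: R]) (normal_pdf 0 1 x * c x)%:E)).
  apply: my_le_integral => x.
    by apply: mule_ge0; [rewrite lee_fin normal_pdf_ge0 | exact: gauss_exp_ge0].
  rewrite EFinM; apply: lee_wpmul2l; first by rewrite lee_fin normal_pdf_ge0.
  apply: IH => //.
    by rewrite addr_ge0 // mulr_ge0 // exprn_even_ge0.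
  move=> v; apply: le_trans (hf _) _; rewrite lee_fin big_ord_recr /=.
  have -> : upd v n x n = x by rewrite /upd eqxx.
  have -> : (\sum_(i < n) upd v n x (widen_ord (leqnSn n) i) ^+ 4 = \sum_(i < n) v i ^+ 4)%R.
    by apply: eq_bigr => i _; rewrite /upd /= ltn_eqF.
  lra.
have -> : \int[@lebesgue_measure R]_(x in [set: R]) (normal_pdf 0 1 x * c x)%:E =
  \int[@lebesgue_measure R]_(x in [set: R]) ((a + M4 * b * n%:R)%:E * (normal_pdf 0 1 x)%:E
    + b%:E * (normal_pdf 0 1 x * x ^+ 4)%:E).
  apply: eq_integral => x _; rewrite -!EFinM -EFinD /c; congr EFin; ring.
have mp : measurable_fun [set: R] (fun x => (normal_pdf 0 1 x)%:E).
  by apply/measurable_EFinP; exact: measurable_normal_pdf.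
have mp4 : measurable_fun [set: R] (fun x => (normal_pdf 0 1 x * x ^+ 4)%:E).
  apply/measurable_EFinP; apply: measurable_funM; first exact: measurable_normal_pdf.
  exact: measurable_funX.
have ca : (0 <= a + M4 * b * n%:R)%R.
  by rewrite addr_ge0 // mulr_ge0 // mulr_ge0 // M4_ge0.
rewrite ge0_integralD //; first last.
- apply: emeasurable_funM => //.
- by move=> x _; rewrite -EFinM lee_fin mulr_ge0 // mulr_ge0 ?normal_pdf_ge0 // exprn_even_ge0.
- apply: emeasurable_funM => //.
- by move=> x _; rewrite -EFinM lee_fin mulr_ge0 // normal_pdf_ge0.
rewrite ge0_integralZl_EFin //; last by move=> x _; rewrite lee_fin normal_pdf_ge0.
rewrite ge0_integralZl_EFin //; last first.
  by move=> x _; rewrite lee_fin mulr_ge0 ?normal_pdf_ge0 // exprn_even_ge0.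
rewrite integral_normal_pdf mule1.
apply: le_trans (leeD (lexx _) (lee_wpmul2l _ mom4)) _; first by rewrite lee_fin.
rewrite -EFinM -EFinD lee_fin.
rewrite -natr1; nra.
Qed.


End S.

Local Open Scope ring_scope.
Section T.
Context {R : realType}.

Lemma ln8 (x : R) : (1 <= x) -> ln x ^+ 8 <= 8 ^+ 8 * x.
Proof.
move=> x1.
have x0 : 0 < x by apply: lt_le_trans x1.
set L := ln x.
have L0 : 0 <= L by apply: ln_ge0.
have h : L / 8 <= expR (L / 8).
  by have := expR_ge1Dx (L / 8); lra.
have h2 : (L / 8) ^+ 8 <= expR (L / 8) ^+ 8.
  apply: lerXn2r; [rewrite nnegrE; exact: divr_ge0 | rewrite nnegrE; exact: expR_ge0 | exact: h].
rewrite -expRM_natl (_ : 8%:R * (L / 8) = L) in h2; last by field.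
rewrite /L lnK ?inE // in h2.
rewrite expr_div_n in h2.
have p8 : (0 : R) < 8 ^+ 8 by apply: exprn_gt0.
rewrite ler_pdivrMr // in h2.
by rewrite mulrC.
Qed.

Lemma T2_bound d (w : 'I_d -> R) :
  Tnorm2 w <= 8 ^+ 8 * d%:R + (\sum_j w j ^+ 4) / 2.
Proof.
have s0 : 0 <= \sum_j w j ^+ 4 by apply: sumr_ge0 => j _; exact: exprn_even_ge0.
rewrite /Tnorm2; apply: bigmax_le.
  by apply: addr_ge0; [apply: mulr_ge0 => //; apply: exprn_ge0|apply: divr_ge0].
move=> S SN.
have k0 : (0 < #|S|)%N by rewrite card_gt0.
have kd : (#|S| <= d)%N by have := max_card S; rewrite card_ord.
set k := #|S| in k0 kd *.
have kR : (0 : R) < k%:R by rewrite ltr0n.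
set x := (2 * d)%:R / k%:R.
have x1 : 1 <= x.
  rewrite /x ler_pdivlMr // mul1r ler_nat; lia.
have hx : k%:R * x = 2 * d%:R by rewrite /x natrM; field; rewrite gt_eqF.
set L := ln x.
have hL := @ln8 x x1.
rewrite -/L in hL.
rewrite mulr_sumr.
apply: (@le_trans _ _ (\sum_(j in S) (8 ^+ 8 * x / 2 + w j ^+ 4 / 2))).
  apply: ler_sum => j _.
  have e : L ^+ 4 * w j ^+ 2 <= (L ^+ 8 + w j ^+ 4) / 2.
    have : 0 <= (L ^+ 4 - w j ^+ 2) ^+ 2 by apply: exprn_even_ge0.
    have -> : w j ^+ 4 = (w j ^+ 2) ^+ 2 by rewrite -exprM.
    have -> : L ^+ 8 = (L ^+ 4) ^+ 2 by rewrite -exprM.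
    nra.
  lra.
rewrite big_split /= -big_distrl /= -big_distrl /= sumr_const.
rewrite -/k -mulr_natl.
apply: lerD.
  have hx' : forall c : R, c *+ k * x = c * (2 * d%:R).
    by move=> c; rewrite -hx [RHS]mulrA mulr_natr.
  rewrite hx'; lra.
rewrite -big_distrl /=; apply: ler_wpM2r; first by rewrite invr_ge0.
rewrite [X in _ <= X](bigID (fun j => j \in S)) /= lerDl.
by apply: sumr_ge0 => j _; exact: exprn_even_ge0.
Qed.

End T.

Local Open Scope ereal_scope.

Theorem lemma4p3 (R : realType) :
  exists C : R, (0 < C)%R /\
    forall d : nat, (1 <= d)%N ->
      expected_Tnorm d <= (C * Num.sqrt (d%:R))%:E.
Proof.
have M0 := @M4_ge0 R.
have K0 : ((0 : R) < 8 ^+ 8)%R by apply: exprn_gt0.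
exists ((8 ^+ 8 + 1) / 2 + M4 / 4)%R; split.
  by lra.
move=> d d1.
set s := Num.sqrt (d%:R : R).
have dR : ((0 : R) < d%:R)%R by rewrite ltr0n.
have s0 : (0 < s)%R by rewrite sqrtr_gt0.
have ds : (d%:R : R) = (s ^+ 2)%R by rewrite sqr_sqrtr // ltW.
set a : R := ((8 ^+ 8 + 1) / 2 * s)%R.
set b : R := (1 / (4 * s))%R.
have b0 : (0 <= b)%R by rewrite /b divr_ge0 // mulr_ge0 // ltW.
apply: le_trans (@key R b b0 d _ a _ _ _) _.
- by rewrite /a mulr_ge0 // ?ltW //; lra.
- by move=> v; rewrite lee_fin sqrtr_ge0.
- move=> v; rewrite lee_fin /Tnorm.
  set w := (fun j : 'I_d => v j).
  have hT := @T2_bound R d w.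
  set T2 := Tnorm2 w in hT *.
  set S4 := (\sum_(j < d) v j ^+ 4)%R.
  have hS : (\sum_j w j ^+ 4 = S4)%R by []. rewrite hS in hT.
  have S40 : (0 <= S4)%R by apply: sumr_ge0 => j _; exact: exprn_even_ge0.
  set t := Num.sqrt T2.
  have t0 : (0 <= t)%R by apply: sqrtr_ge0.
  have t2 : (t ^+ 2 <= 8 ^+ 8 * d%:R + S4 / 2)%R.
    have [T0|T0] := leP 0%R T2.
      by rewrite /t sqr_sqrtr.
    rewrite /t ler0_sqrtr ?ltW // expr0n /=.
    nra.
  rewrite ds in t2.
  have e : (a + b * S4 = ((8 ^+ 8 * s ^+ 2 + S4 / 2) / s + s) / 2)%R.
    by rewrite /a /b; field; rewrite gt_eqF.
  rewrite e.
  set r := (((8 ^+ 8 * s ^+ 2 + S4 / 2) / s + s) / 2)%R.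
  have hr : (r * (2 * s) = 8 ^+ 8 * s ^+ 2 + S4 / 2 + s ^+ 2)%R.
    by rewrite /r; field; rewrite gt_eqF.
  have hts : (0 <= (t - s) ^+ 2)%R by apply: exprn_even_ge0.
  nra.
- rewrite lee_fin ds /a /b.
  have -> : (M4 * (1 / (4 * s)) * s ^+ 2 = M4 / 4 * s)%R by field; rewrite gt_eqF.
  lra.
Qed.
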